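(* Let $\mathfrak F_3$ be the free group on $\{x,y,z\}$. Define the map $\Phi$ on vertices of the Farey tree $\mathrm{F}\mathbb T$ by $\Phi(r,t,s)=(\omega_r,\omega_t,\omega_s)\in\mathfrak F_3^3$ (each $\omega$ regarded as an element of $\mathfrak F_3$). Then $\Phi$ is an isomorphism of rooted planar binary trees from $\mathrm{F}\mathbb T$ onto the word tree $\mathrm{W}\mathbb T$; that is, $\Phi$ sends the root to the root and sends the left (resp. right) child of each vertex to the left (resp. right) child of its image. Equivalently, for every vertex $(r,t,s)$ of $\mathrm{F}\mathbb T$, the vertex of $\mathrm{W}\mathbb T$ at the same position (reached from the root by the same sequence of left/right moves) is $(\omega_r,\omega_t,\omega_s)$.
   Context: Farey tree $\mathrm{F}\mathbb T$: rooted planar binary tree with root $(\frac01,\frac11,\frac10)$, and each vertex $(\frac ab,\frac cd,\frac ef)$ has left child $(\frac ab,\frac{a+c}{b+d},\frac cd)$ and right child $(\frac cd,\frac{c+e}{d+f},\frac ef)$; here $\frac10$ represents $\infty$. Every positive rational occurs exactly once as a middle entry. Word tree $\mathrm{W}\mathbb T$: rooted planar binary tree with vertices in $\mathfrak F_3^3$, root $(x,y,z)$, and a vertex $(a,b,c)$ has left child $(a,bcb^{-1},b)$ and right child $(b,b^{-1}ab,c)$. Modified lattice: the planar graph with vertex set $\mathbb Z^2$ whose edges are the horizontal unit segments $[(i,j),(i+1,j)]$, the vertical unit segments $[(i,j),(i,j+1)]$, and the diagonal segments of slope $-1$ joining $(i,j+1)$ and $(i+1,j)$. Words $\omega_t$: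 set $\omega_{0/1}=x$, $\omega_{1/0}=z$. For a reduced fraction $t=p/q\in(0,\infty)$, let $L_t$ be the segment from $(0,0)$ to $(q,p)$, oriented from $(0,0)$ to $(q,p)$. List the edges of the modified lattice whose relative interior meets $L_t$, in the order of the intersection points along $L_t$. A horizontal (resp. diagonal, vertical) edge contributes the letter $x$ (resp. $y$, $z$) if the midpoint of the edge is not on the right-hand side of the oriented segment $L_t$ (including the case that the midpoint lies on $L_t$), and contributes $x^{-1}$ (resp. $y^{-1}$, $z^{-1}$) if the midpoint is on the right-hand side. The word $\omega_t$ is the concatenation of these letters in order. *)

(* Defs.v *)
From mathcomp Require Import all_boot.
Set Implicit Arguments. Unset Strict Implicit. Unset Printing Implicit Defensive.

(* The free group F_3 on {x, y, z}, as freely reduced words.           *)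
(* A letter is (g, b) with g : 'I_3 (0 = x, 1 = y, 2 = z) and b = true *)
(* for the generator, b = false for its inverse.                       *)
Definition letter := ('I_3 * bool)%type.
Definition linv (a : letter) : letter := (a.1, ~~ a.2).

Definition reducedw (w : seq letter) : bool := sorted (fun a b => b != linv a) w.

Definition reduce (w : seq letter) : seq letter :=
  foldr (fun a acc => match acc with
                      | b :: rest => if b == linv a then rest else a :: acc
                      | [::] => [:: a] end) [::] w.

Lemma reduce_reduced w : reducedw (reduce w).
Proof.
elim: w => [|a w IH] //=.
move: IH; case: (reduce w) => [|b rest] //= Hr.
case: ifP => Hb; first exact: path_sorted Hr.
by rewrite /reducedw /= Hb Hr.
Qed.

Definition F3 := {w : seq letter | reducedw w}.
Definition F3_of (w : seq letter) : F3 := exist _ (reduce w) (reduce_reduced w).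
Definition F3mul (u v : F3) : F3 := F3_of (proj1_sig u ++ proj1_sig v).
Definition F3inv (u : F3) : F3 := F3_of (rev (map linv (proj1_sig u))).

Definition gx : F3 := F3_of [:: (@Ordinal 3 0 isT, true)].
Definition gy : F3 := F3_of [:: (@Ordinal 3 1 isT, true)].
Definition gz : F3 := F3_of [:: (@Ordinal 3 2 isT, true)].

(* Positions in a rooted planar binary tree: sequences of moves from   *)
(* the root, false = left child, true = right child.                   *)

(* Farey tree.  A fraction a/b is the pair (a, b); 1/0 stands for oo.  *)
Definition frac := (nat * nat)%type.
Definition fvertex := (frac * frac * frac)%type.
Definition fadd (r s : frac) : frac := (r.1 + s.1, r.2 + s.2)%N.
Definition farey_root : fvertex := ((0, 1), (1, 1), (1, 0))%N.
Definition fleft (v : fvertex) : fvertex :=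
  let: (r, t, s) := v in (r, fadd r t, t).
Definition fright (v : fvertex) : fvertex :=
  let: (r, t, s) := v in (t, fadd t s, s).
Definition fchild (v : fvertex) (m : bool) : fvertex :=
  if m then fright v else fleft v.
Definition farey_at (mv : seq bool) : fvertex := foldl fchild farey_root mv.

Definition wvertex := (F3 * F3 * F3)%type.
Definition word_root : wvertex := (gx, gy, gz).
Definition wleft (v : wvertex) : wvertex :=
  let: (a, b, c) := v in (a, F3mul (F3mul b c) (F3inv b), b).
Definition wright (v : wvertex) : wvertex :=
  let: (a, b, c) := v in (b, F3mul (F3mul (F3inv b) a) b, c).
Definition wchild (v : wvertex) (m : bool) : wvertex :=
  if m then wright v else wleft v.
Definition word_at (mv : seq bool) : wvertex := foldl wchild word_root mv.

(* The words omega_t.  For coprime p, q > 0, L is the segment from     *)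
(* (0,0) to (q,p), parametrised as s |-> (q s, p s), s in [0,1].       *)
(* Each crossed edge is recorded as (num, den, letter) where num/den is *)
(* the parameter s of the intersection point.                          *)
(*  - horizontal edge [(i,j),(i+1,j)]: meets L in its relative interior *)
(*    iff p i < q j < p (i+1); parameter j/p; midpoint (i+1/2, j) is    *)
(*    strictly right of L iff q(2j) < p(2i+1).                          *)
(*  - vertical edge [(i,j),(i,j+1)]: iff q j < p i < q (j+1);           *)
(*    parameter i/q; midpoint (i, j+1/2) right iff q(2j+1) < p(2i).     *)
(*  - diagonal edge [(i,j+1),(i+1,j)]: iff                              *)
(*    (p+q) i < q (i+j+1) < (p+q)(i+1); parameter (i+j+1)/(p+q);        *)
(*    midpoint (i+1/2, j+1/2) right iff q(2j+1) < p(2i+1).              *)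
(* A point of L is on the right of the oriented L iff q*Y - p*X < 0.   *)
(* Ranges: horizontal 0<=i<q, 0<=j<=p; vertical 0<=i<=q, 0<=j<p;      *)
(* diagonal 0<=i<q, 0<=j<p (any edge meeting L lies in [0,q]x[0,p]).  *)
Definition crossing := (nat * nat * letter)%type.

Definition mkletter (g : 'I_3) (notright : bool) : letter := (g, notright).

Definition horiz_crossings (p q : nat) : seq crossing :=
  flatten [seq [seq (j, p, mkletter (@Ordinal 3 0 isT) (p * (2 * i + 1) <= q * (2 * j)))
  | i <- iota 0 q & (p * i < q * j < p * i.+1)] | j <- iota 0 p.+1]%N.

Definition vert_crossings (p q : nat) : seq crossing :=
  flatten [seq [seq (i, q, mkletter (@Ordinal 3 2 isT) (p * (2 * i) <= q * (2 * j + 1)))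
  | i <- iota 0 q.+1 & (q * j < p * i < q * j.+1)] | j <- iota 0 p]%N.

Definition diag_crossings (p q : nat) : seq crossing :=
  flatten [seq [seq (i + j + 1, p + q, mkletter (@Ordinal 3 1 isT) (p * (2 * i + 1) <= q * (2 * j + 1)))
  | i <- iota 0 q & ((p + q) * i < q * (i + j + 1) < (p + q) * i.+1)] | j <- iota 0 p]%N.

(* order along L: by the parameter num/den *)
Definition cross_le (c1 c2 : crossing) : bool :=
  (c1.1.1 * c2.1.2 <= c2.1.1 * c1.1.2)%N.

Definition omega_word (p q : nat) : seq letter :=
  map (fun c : crossing => c.2)
      (sort cross_le (horiz_crossings p q ++ diag_crossings p q ++ vert_crossings p q)).

Definition omega (t : frac) : F3 :=
  let g := gcdn t.1 t.2 in
  let p := (t.1 %/ g)%N in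
  let q := (t.2 %/ g)%N in
  if q == 0%N then gz else if p == 0%N then gx else F3_of (omega_word p q).

Definition Phi (v : fvertex) : wvertex :=
  let: (r, t, s) := v in (omega r, omega t, omega s).

(* Main.v *)
Require Import Defs.
From mathcomp Require Import all_boot.
From mathcomp Require Import zify.
Set Implicit Arguments. Unset Strict Implicit. Unset Printing Implicit Defensive.


Definition step (a : letter) (acc : seq letter) : seq letter :=
  match acc with
  | b :: rest => if b == linv a then rest else a :: acc
  | [::] => [:: a] end.

Lemma reduceE w : reduce w = foldr step [::] w.
Proof. by []. Qed.

Lemma reduce_cons a w : reduce (a :: w) = step a (reduce w).
Proof. by []. Qed.

Lemma linvK : involutive linv.
Proof. by case=> g b; rewrite /linv /= negbK. Qed.

Lemma linv_neq a : (linv a == a) = false.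
Proof. by case: a => g b; rewrite /linv xpair_eqE eqxx /=; case: b. Qed.

Lemma step_reduced a w : reducedw w -> reducedw (step a w).
Proof.
case: w => [|b rest] //= Hr.
case: ifP => Hb; first exact: path_sorted Hr.
by rewrite /reducedw /= Hb Hr.
Qed.

Lemma stepK a w : reducedw w -> step (linv a) (step a w) = w.
Proof.
case: w => [|b rest] /=; first by rewrite linvK eqxx.
move=> Hr; case: ifP => Hb.
  move/eqP: Hb Hr => -> Hr; case: rest Hr => [|c r] /=; first by [].
  by case/andP=> Hc _; rewrite linvK in Hc *; rewrite (negbTE Hc).
by rewrite /= linvK eqxx.
Qed.

Lemma reduce_id w : reducedw w -> reduce w = w.
Proof.
elim: w => [|a w IH] //= Hr.
have Hw : reducedw w by exact: path_sorted Hr.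
rewrite IH //; case: w Hr {IH Hw} => [|b rest] //= /andP[Hb _].
by rewrite (negbTE Hb).
Qed.

Lemma reduceK w : reduce (reduce w) = reduce w.
Proof. exact/reduce_id/reduce_reduced. Qed.

Lemma foldr_step_reduced u acc : reducedw acc -> reducedw (foldr step acc u).
Proof. by elim: u => //= a u IH H; apply: step_reduced; apply: IH. Qed.

Lemma foldr_step_reduce u acc : reducedw acc ->
  foldr step acc (reduce u) = foldr step acc u.
Proof.
move=> Hacc; elim: u => [|a u IH] //=.
rewrite -IH -/(step a (reduce u)).
have Hr := reduce_reduced u.
case E: (reduce u) Hr => [|b rest] Hr //=.
case: ifP => Hb //=.
move/eqP: Hb => Hb; rewrite Hb /=.
have Hf := foldr_step_reduced rest Hacc.
by rewrite -{1}(linvK a) stepK.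
Qed.

Lemma reduce_cat u v : reduce (u ++ v) = reduce (reduce u ++ reduce v).
Proof.
rewrite !reduceE !foldr_cat -!reduceE reduceK.
by rewrite foldr_step_reduce // reduce_reduced.
Qed.

Lemma reduce_catl u u' v : reduce u = reduce u' -> reduce (u ++ v) = reduce (u' ++ v).
Proof. by move=> H; rewrite reduce_cat H -reduce_cat. Qed.

Lemma reduce_catr u v v' : reduce v = reduce v' -> reduce (u ++ v) = reduce (u ++ v').
Proof. by move=> H; rewrite reduce_cat H -reduce_cat. Qed.

Lemma reduce_conscong a v v' : reduce v = reduce v' -> reduce (a :: v) = reduce (a :: v').
Proof. by move=> H; rewrite !reduce_cons H. Qed.

Lemma reduce_cancel a w : reduce (a :: linv a :: w) = reduce w.
Proof.
rewrite !reduce_cons -{1}(linvK a) stepK //; exact: reduce_reduced.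
Qed.

Lemma reduce_cancel' a w : reduce (linv a :: a :: w) = reduce w.
Proof. by rewrite -{2}(linvK a) reduce_cancel. Qed.

Lemma F3_of_eq u v : reduce u = reduce v -> F3_of u = F3_of v.
Proof. by move=> H; apply: val_inj => /=. Qed.

Lemma F3_of_val (u : F3) : F3_of (val u) = u.
Proof. apply: val_inj => /=; exact: reduce_id (valP u). Qed.

Definition winv (w : seq letter) := rev (map linv w).

Lemma winv_cons a w : winv (a :: w) = winv w ++ [:: linv a].
Proof. by rewrite /winv /= rev_cons cats1. Qed.

Lemma winv_cat u v : winv (u ++ v) = winv v ++ winv u.
Proof. by rewrite /winv map_cat rev_cat. Qed.

Lemma winvK : involutive winv.
Proof.
move=> w; rewrite /winv map_rev revK -map_comp.
by rewrite (@eq_map _ _ _ id) ?map_id // => a /=; rewrite linvK.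
Qed.

Lemma reduce_winv w : reduce (winv (reduce w)) = reduce (winv w).
Proof.
elim: w => [|a w IH] //.
rewrite winv_cons (reduce_cat (winv w)) -IH -reduce_cat -winv_cons.
rewrite reduce_cons.
have Hr := reduce_reduced w.
case E: (reduce w) Hr => [|b rest] Hr //=.
case: ifP => Hb //.
move/eqP: Hb => ->.
rewrite !winv_cons -catA /= linvK.
by rewrite reduce_cat (reduce_cancel a [::]) /= cats0 reduceK.
Qed.

Definition limg (img : 'I_3 -> seq letter) (a : letter) :=
  if a.2 then img a.1 else winv (img a.1).
Definition subst img (w : seq letter) := flatten (map (limg img) w).

Lemma subst_cons img a w : subst img (a :: w) = limg img a ++ subst img w.
Proof. by []. Qed.

Lemma subst_cat img u v : subst img (u ++ v) = subst img u ++ subst img v.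
Proof. by rewrite /subst map_cat flatten_cat. Qed.

Lemma limg_linv img a : limg img (linv a) = winv (limg img a).
Proof. by case: a => g [] //=; rewrite /limg /= winvK. Qed.

Lemma subst_winv img w : subst img (winv w) = winv (subst img w).
Proof.
elim: w => [|a w IH] //.
by rewrite winv_cons subst_cat IH subst_cons winv_cat /subst /= cats0 limg_linv.
Qed.

Lemma reduce_winv_cancel u v : reduce (u ++ winv u ++ v) = reduce v.
Proof.
elim: u v => [|b u IH] v //.
rewrite winv_cons -catA cat1s cat_cons reduce_cons IH -reduce_cons.
by rewrite reduce_cancel.
Qed.

Lemma reduce_subst img w : reduce (subst img (reduce w)) = reduce (subst img w).
Proof.
elim: w => [|a w IH] //.
rewrite subst_cons (reduce_cat (limg img a)) -IH -reduce_cat -subst_cons.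
rewrite reduce_cons.
have Hr := reduce_reduced w.
case E: (reduce w) Hr => [|b rest] Hr //=.
case: ifP => Hb //.
move/eqP: Hb => ->.
by rewrite !subst_cons limg_linv catA -catA reduce_winv_cancel.
Qed.

Definition Fsub img (u : F3) : F3 := F3_of (subst img (val u)).

Lemma Fsub_of img w : Fsub img (F3_of w) = F3_of (subst img w).
Proof. by apply: F3_of_eq; rewrite reduce_subst. Qed.

Lemma Fsub_mul img u v : Fsub img (F3mul u v) = F3mul (Fsub img u) (Fsub img v).
Proof.
rewrite /F3mul Fsub_of; apply: F3_of_eq => /=.
by rewrite subst_cat reduce_cat.
Qed.

Lemma Fsub_inv img u : Fsub img (F3inv u) = F3inv (Fsub img u).
Proof.
rewrite /F3inv Fsub_of; apply: F3_of_eq => /=.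
by rewrite -/(winv _) -/(winv _) subst_winv reduce_winv.
Qed.


Definition ox : 'I_3 := @Ordinal 3 0 isT.
Definition oy : 'I_3 := @Ordinal 3 1 isT.
Definition oz : 'I_3 := @Ordinal 3 2 isT.

Section Walk.
Variables p q : nat.

Definition Dcr i j : crossing :=
  (i + j + 1, p + q, mkletter oy (p * (2 * i + 1) <= q * (2 * j + 1)))%N.
Definition Vcr i j : crossing :=
  (i, q, mkletter oz (p * (2 * i) <= q * (2 * j + 1)))%N.
Definition Hcr i j : crossing :=
  (j, p, mkletter ox (p * (2 * i + 1) <= q * (2 * j)))%N.

Definition trans i j : crossing :=
  if p * (i + 1) < q * (j + 1) then Vcr (i + 1) j else Hcr i (j + 1).

Fixpoint walk n i j : seq crossing :=
  Dcr i j :: match n with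
             | 0 => [::]
             | n'.+1 => if p * (i + 1) < q * (j + 1) then Vcr (i + 1) j :: walk n' (i + 1) j
                        else Hcr i (j + 1) :: walk n' i (j + 1)
             end.

Definition onpath i j := [&& i < q, j < p, p * i < q * (j + 1) & q * j < p * (i + 1)].

Hypothesis cop : coprime p q.
Hypothesis p0 : 0 < p.
Hypothesis q0 : 0 < q.

Lemma corner i j : i < q -> p * (i + 1) = q * (j + 1) -> i + 1 = q /\ j + 1 = p.
Proof.
move=> Hi E.
have : q %| p * (i + 1) by rewrite E dvdn_mulr.
rewrite Gauss_dvdr; last by rewrite coprime_sym.
move=> /dvdn_leq H; have {H} H : q <= i + 1 by apply: H; lia.
have Hq : i + 1 = q by lia.
split=> //; rewrite Hq in E; nia.
Qed.

Lemma onpath_next n i j : i + j + n.+1 = p + q - 2 -> onpath i j ->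
  if p * (i + 1) < q * (j + 1) then onpath (i + 1) j else onpath i (j + 1).
Proof.
move=> Hn /and4P[Hi Hj H1 H2].
case: ifP => H.
  rewrite /onpath; apply/and4P; split; try lia.
  case: (ltnP (i + 1) q) => // Hq.
  nia.
have H' : q * (j + 1) < p * (i + 1).
  rewrite ltn_neqAle; apply/andP; split; last by lia.
  apply/negP => /eqP E; have [] := corner Hi (esym E); lia.
rewrite /onpath; apply/and4P; split; try lia.
case: (ltnP (j + 1) p) => // Hp.
nia.
Qed.


Definition Fam := horiz_crossings p q ++ diag_crossings p q ++ vert_crossings p q.

Lemma D_in_diag i j : onpath i j -> Dcr i j \in diag_crossings p q.
Proof.
case/and4P=> Hi Hj H1 H2.
rewrite /diag_crossings; apply/(@flatten_mapP nat _); exists j.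
- by rewrite mem_iota; lia.
- apply/(@mapP nat _); exists i => //.
  by rewrite mem_filter mem_iota; apply/andP; split; [apply/andP; split; nia | lia].
Qed.

Lemma trans_in i j : i + j < p + q - 2 -> onpath i j -> trans i j \in Fam.
Proof.
move=> Hn Hop; have := @onpath_next (p + q - 2 - i - j).-1 i j.
have Hn' : i + j + (p + q - 2 - i - j).-1.+1 = p + q - 2 by lia.
move/(_ Hn' Hop); move: Hop => /and4P[Hi Hj H1 H2].
rewrite /trans /Fam; case: ifP => H /and4P[Hi' Hj' H1' H2'].
- rewrite mem_cat; apply/orP; right; rewrite mem_cat; apply/orP; right.
  rewrite /vert_crossings; apply/(@flatten_mapP nat _); exists j.
  + by rewrite mem_iota; lia.
  + apply/(@mapP nat _); exists (i + 1) => //.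
    by rewrite mem_filter mem_iota; apply/andP; split; [apply/andP; split; nia | lia].
- rewrite mem_cat; apply/orP; left.
  rewrite /horiz_crossings; apply/(@flatten_mapP nat _); exists (j + 1).
  + by rewrite mem_iota; lia.
  + apply/(@mapP nat _); exists i => //.
    by rewrite mem_filter mem_iota; apply/andP; split; [apply/andP; split; nia | lia].
Qed.


Lemma D_in_Fam i j : onpath i j -> Dcr i j \in Fam.
Proof. by move=> H; rewrite mem_cat; apply/orP; right; rewrite mem_cat D_in_diag. Qed.

Lemma walk_sub n i j : i + j + n = p + q - 2 -> onpath i j -> {subset walk n i j <= Fam}.
Proof.
elim: n i j => [|n IH] i j Hn Hop c.
  by rewrite inE => /eqP ->; apply: D_in_Fam.
have Htr := @trans_in i j ltac:(lia) Hop.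
have Hnx := onpath_next Hn Hop.
rewrite /= in_cons; case/orP => [/eqP -> | ]; first exact: D_in_Fam.
move: Htr Hnx; rewrite /trans; case: ifP => H Htr Hnx; rewrite in_cons; case/orP => [/eqP -> // | ] Hc.
  by apply: (IH (i + 1) j) Hc; [lia | ].
by apply: (IH i (j + 1)) Hc; [lia | ].
Qed.

Lemma walk_contains n i j : i + j + n = p + q - 2 -> onpath i j ->
  forall a b, i <= a -> j <= b -> onpath a b ->
  Dcr a b \in walk n i j /\ (a + b < p + q - 2 -> trans a b \in walk n i j).
Proof.
elim: n i j => [|n IH] i j Hn Hop a b Ha Hb Hab.
  move: Hop Hab => /and4P[Hi Hj _ _] /and4P[Ha' Hb' _ _].
  have [-> ->] : a = i /\ b = j by lia.
  by split; [rewrite inE | lia].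
case: (boolP ((a == i) && (b == j))) => [/andP[/eqP -> /eqP ->] | Hne].
  split; first by rewrite inE eqxx.
  by move=> _; rewrite /trans /=; case: ifP => _; rewrite !inE eqxx orbT.
have Hnx := onpath_next Hn Hop.
move: Hab Hop => /and4P[Ha' Hb' H1 H2] /and4P[Hi Hj H3 H4].
move: Hnx; rewrite /=; case: ifP => H Hnx.
  have Hia : i + 1 <= a.
    case: (ltnP i a) => Hia; first by lia.
    have Ei : a = i by lia.
    have Hjb : j + 1 <= b by move: Hne; rewrite Ei eqxx /=; lia.
    subst a; nia.
  have [IH1 IH2] := IH (i + 1) j ltac:(lia) Hnx a b Hia Hb (introT and4P (And4 Ha' Hb' H1 H2)).
  by split; [rewrite !inE IH1 !orbT | move=> Hlt; rewrite !inE IH2 ?orbT].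
have Hjb : j + 1 <= b.
  case: (ltnP j b) => Hjb; first by lia.
  have Ej : b = j by lia.
  have Hia : i + 1 <= a by move: Hne; rewrite Ej eqxx andbT; lia.
  subst b; nia.
have [IH1 IH2] := IH i (j + 1) ltac:(lia) Hnx a b Ha Hjb (introT and4P (And4 Ha' Hb' H1 H2)).
by split; [rewrite !inE IH1 !orbT | move=> Hlt; rewrite !inE IH2 ?orbT].
Qed.


Lemma onpath00 : onpath 0 0.
Proof. rewrite /onpath; apply/and4P; split; lia. Qed.

Lemma Fam_sub_walk : {subset Fam <= walk (p + q - 2) 0 0}.
Proof.
have W := @walk_contains (p + q - 2) 0 0 ltac:(lia) onpath00.
move=> c; rewrite mem_cat => /orP[|]; last rewrite mem_cat => /orP[|].
- rewrite /horiz_crossings => /(@flatten_mapP nat _)[j' Hj' /(@mapP nat _)[i Hi ->]].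
  move: Hj' Hi; rewrite mem_iota mem_filter mem_iota => Hj' /andP[/andP[C1 C2] Hi].
  case: j' Hj' C1 C2 => [|b] Hj' C1 C2; first by lia.
  have Hop : onpath i b by rewrite /onpath; apply/and4P; split; nia.
  have Hb : b < p - 1 \/ i < q - 1 by nia.
  have [_ T] := W i b ltac:(lia) ltac:(lia) Hop.
  have := T ltac:(lia); rewrite /trans ifF; last by apply/negbTE; rewrite -leqNgt; nia.
  by rewrite /Hcr addn1.
- rewrite /diag_crossings => /(@flatten_mapP nat _)[j Hj /(@mapP nat _)[i Hi ->]].
  move: Hj Hi; rewrite mem_iota mem_filter mem_iota => Hj /andP[/andP[C1 C2] Hi].
  have Hop : onpath i j by rewrite /onpath; apply/and4P; split; nia.
  by have [T _] := W i j ltac:(lia) ltac:(lia) Hop.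
- rewrite /vert_crossings => /(@flatten_mapP nat _)[j Hj /(@mapP nat _)[i' Hi ->]].
  move: Hj Hi; rewrite mem_iota mem_filter mem_iota => Hj /andP[/andP[C1 C2] Hi].
  case: i' Hi C1 C2 => [|a] Hi C1 C2; first by lia.
  have Hop : onpath a j by rewrite /onpath; apply/and4P; split; nia.
  have Hb : j < p - 1 \/ a < q - 1 by nia.
  have [_ T] := W a j ltac:(lia) ltac:(lia) Hop.
  have := T ltac:(lia); rewrite /trans ifT; last by nia.
  by rewrite /Vcr addn1.
Qed.


End Walk.

Lemma uniq_flatten_map (S R : eqType) (F : S -> seq R) (s : seq S) :
  uniq s -> (forall x, x \in s -> uniq (F x)) ->
  (forall x y c, x \in s -> y \in s -> c \in F x -> c \in F y -> x = y) ->
  uniq (flatten (map F s)).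
Proof.
elim: s => [|x s IH] //= /andP[Hx Hs] HF Hc.
rewrite cat_uniq HF ?mem_head // IH //; last first.
- by move=> a b c Ha Hb; apply: Hc; rewrite inE ?Ha ?Hb orbT.
- by move=> a Ha; apply: HF; rewrite inE Ha orbT.
rewrite andbT; apply/hasPn => c /flatten_mapP[y Hy Hcy]; apply/negP => Hcx.
have E : x = y by apply: (Hc x y c); rewrite ?inE ?eqxx ?Hy ?orbT.
by move: Hx; rewrite E Hy.
Qed.

Section Walk2.
Variables p q : nat.
Hypothesis cop : coprime p q.
Hypothesis p0 : 0 < p.
Hypothesis q0 : 0 < q.

Lemma uniq_Fam : uniq (Fam p q).
Proof.
rewrite /Fam (cat_uniq (horiz_crossings p q)) (cat_uniq (diag_crossings p q)).
apply/and3P; split; [ | | apply/and3P; split].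
- rewrite /horiz_crossings; apply: (@uniq_flatten_map nat _); first exact: iota_uniq.
  + move=> j _; rewrite map_inj_in_uniq ?filter_uniq ?iota_uniq //.
    move=> i i'; rewrite !mem_filter => /andP[/andP[A1 A2] _] /andP[/andP[B1 B2] _] [E].
    nia.
  + move=> j j' c _ _ /(@mapP nat _)[i _ ->] /(@mapP nat _)[i' _ []] //.
- apply/hasPn => c; rewrite (mem_cat c (diag_crossings p q)) => /orP[] Hc; apply/negP.
  + rewrite /horiz_crossings => /(@flatten_mapP nat _)[j _ /(@mapP nat _)[i _ E]].
    move: Hc; rewrite /diag_crossings => /(@flatten_mapP nat _)[j' _ /(@mapP nat _)[i' _ E']].
    by move: E'; rewrite E.
  + rewrite /horiz_crossings => /(@flatten_mapP nat _)[j _ /(@mapP nat _)[i _ E]].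
    move: Hc; rewrite /vert_crossings => /(@flatten_mapP nat _)[j' _ /(@mapP nat _)[i' _ E']].
    by move: E'; rewrite E.
- rewrite /diag_crossings; apply: (@uniq_flatten_map nat _); first exact: iota_uniq.
  + move=> j _; rewrite map_inj_in_uniq ?filter_uniq ?iota_uniq //.
    by move=> i i' _ _ [E]; lia.
  + move=> j j' c _ _ /(@mapP nat _)[i Hi ->] /(@mapP nat _)[i' Hi' [E]] _.
    move: Hi Hi'; rewrite !mem_filter => /andP[/andP[A1 A2] _] /andP[/andP[B1 B2] _].
    have : i = i' by rewrite E in A1 A2; nia.
    lia.
- apply/hasPn => c Hc; apply/negP.
  rewrite /diag_crossings => /(@flatten_mapP nat _)[j _ /(@mapP nat _)[i _ E]].
  move: Hc; rewrite /vert_crossings => /(@flatten_mapP nat _)[j' _ /(@mapP nat _)[i' _ E']].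
  by move: E'; rewrite E.
- rewrite /vert_crossings; apply: (@uniq_flatten_map nat _); first exact: iota_uniq.
  + move=> j _; rewrite map_inj_in_uniq ?filter_uniq ?iota_uniq //.
    by move=> i i' _ _ [E].
  + move=> j j' c _ _ /(@mapP nat _)[i Hi ->] /(@mapP nat _)[i' Hi' [E]] _.
    move: Hi Hi'; rewrite !mem_filter => /andP[/andP[A1 A2] _] /andP[/andP[B1 B2] _].
    subst i'; nia.
Qed.


Definition ltc (c1 c2 : crossing) : bool := c1.1.1 * c2.1.2 < c2.1.1 * c1.1.2.

Lemma path_walk (r : rel crossing) x n i j :
  path r x (walk p q n i j) = r x (Dcr p q i j) && sorted r (walk p q n i j).
Proof. by case: n. Qed.

Lemma walk_sorted n i j : i + j + n = p + q - 2 -> onpath p q i j ->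
  sorted ltc (walk p q n i j).
Proof.
elim: n i j => [|n IH] i j Hn Hop //.
have Hnx := onpath_next cop p0 q0 Hn Hop.
move: Hop => /and4P[Hi Hj H1 H2].
rewrite /=; move: Hnx; case: ifP => H Hnx /=.
  rewrite path_walk IH //; last by lia.
  move: Hnx => /and4P[_ _ _ _]; rewrite /ltc /=; apply/andP; split; [|apply/andP; split => //]; nia.
rewrite path_walk IH //; last by lia.
move: Hnx => /and4P[_ _ _ H4]; rewrite /ltc /=; apply/andP; split; [|apply/andP; split => //]; nia.
Qed.

Lemma walk_den n i j c : c \in walk p q n i j -> 0 < c.1.2.
Proof.
elim: n i j => [|n IH] i j /=; first by rewrite inE => /eqP -> /=; lia.
rewrite in_cons => /orP[/eqP -> /=| ]; first by lia.
case: ifP => _; rewrite in_cons => /orP[/eqP -> /=| ]; try lia; apply: IH.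
Qed.


Lemma pairwise_uniq_irr (T : eqType) (r : rel T) s :
  irreflexive r -> pairwise r s -> uniq s.
Proof.
move=> Hirr; elim: s => [|x s IH] //; rewrite pairwise_cons => /andP[Ha Hs].
rewrite cons_uniq IH // andbT; apply/negP => Hx.
by move/allP: Ha => /(_ x Hx); rewrite Hirr.
Qed.

Lemma pairwise_tot (T : eqType) (r : rel T) s x y :
  pairwise r s -> x \in s -> y \in s -> x != y -> r x y || r y x.
Proof.
elim: s => [|a s IH] //; rewrite pairwise_cons => /andP[Ha Hs].
rewrite !inE => /orP[/eqP ->|Hx] /orP[/eqP ->|Hy]; rewrite ?eqxx //.
- by move=> _; move/allP: Ha => /(_ y Hy) ->.
- by move=> _; move/allP: Ha => /(_ x Hx) ->; rewrite orbT.
- exact: IH.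
Qed.

Lemma omega_word_walk : omega_word p q = map (fun c : crossing => c.2) (walk p q (p + q - 2) 0 0).
Proof.
rewrite /omega_word; congr map.
set WL := walk p q (p + q - 2) 0 0.
have Hs : sorted ltc WL by apply: walk_sorted; [lia | exact: onpath00].
have HP : all [pred c : crossing | 0 < c.1.2] WL by apply/allP => c; exact: walk_den.
have Htr : {in [pred c : crossing | 0 < c.1.2] & &, transitive ltc}.
  move=> y x z; rewrite !inE /ltc => Hy Hx Hz H1 H2; nia.
have Htr' : {in [pred c : crossing | 0 < c.1.2] & &, transitive cross_le}.
  move=> y x z; rewrite !inE /cross_le => Hy Hx Hz H1 H2; nia.
have Hpw : pairwise ltc WL by rewrite -(sorted_pairwise_in Htr).
have Hu : uniq WL by apply: (pairwise_uniq_irr (r := ltc)) => // c; rewrite /ltc ltnn.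
have Hperm : perm_eq WL (Fam p q).
  apply: uniq_perm => //; first exact: uniq_Fam.
  move=> c; apply/idP/idP => Hc.
    by apply: (walk_sub cop p0 q0 (n := p + q - 2) (i := 0) (j := 0)) Hc; [lia | exact: onpath00].
  exact: Fam_sub_walk.
have Hsle : sorted cross_le WL.
  by apply: sub_sorted Hs => a b; rewrite /ltc /cross_le => /ltnW.
have <- : sort cross_le WL = sort cross_le (Fam p q).
  apply/perm_sort_inP => //.
  - by move=> a b _ _; rewrite /cross_le leq_total.
  - move=> y x z Hy Hx Hz; apply: Htr'; by move/allP: HP => HP; apply: HP.
  - move=> a b Ha Hb /andP[H1 H2]; apply/eqP; apply/negPn/negP => Hne.
    have := pairwise_tot Hpw Ha Hb Hne; rewrite /ltc; move: H1 H2; rewrite /cross_le.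
    move=> H1 H2 /orP[] H; lia.
exact: (sorted_sort_in Htr').
Qed.

End Walk2.


Definition lw p q n i j := map (fun c : crossing => c.2) (walk p q n i j).

Lemma lw0 p q i j : lw p q 0 i j = [:: (oy, p * (2 * i + 1) <= q * (2 * j + 1))].
Proof. by []. Qed.

Lemma lwS p q n i j : lw p q n.+1 i j =
  (oy, p * (2 * i + 1) <= q * (2 * j + 1)) ::
  if p * (i + 1) < q * (j + 1)
  then (oz, p * (2 * (i + 1)) <= q * (2 * j + 1)) :: lw p q n (i + 1) j
  else (ox, p * (2 * i + 1) <= q * (2 * (j + 1))) :: lw p q n i (j + 1).
Proof. by rewrite /lw /=; case: ifP. Qed.

Definition imgL (g : 'I_3) : seq letter :=
  if val g == 0 then [:: (ox, true)]
  else if val g == 1 then [:: (oy, true); (oz, true); (oy, false)]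
  else [:: (oy, true)].

Definition imgR (g : 'I_3) : seq letter :=
  if val g == 0 then [:: (oy, true)]
  else if val g == 1 then [:: (oy, false); (ox, true); (oy, true)]
  else [:: (oz, true)].

Lemma limgL_y b : limg imgL (oy, b) = [:: (oy, true); (oz, b); (oy, false)].
Proof. by case: b. Qed.
Lemma limgL_z b : limg imgL (oz, b) = [:: (oy, b)].
Proof. by case: b. Qed.
Lemma limgL_x b : limg imgL (ox, b) = [:: (ox, b)].
Proof. by case: b. Qed.
Lemma limgR_y b : limg imgR (oy, b) = [:: (oy, false); (ox, b); (oy, true)].
Proof. by case: b. Qed.
Lemma limgR_z b : limg imgR (oz, b) = [:: (oz, b)].
Proof. by case: b. Qed.
Lemma limgR_x b : limg imgR (ox, b) = [:: (oy, b)].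
Proof. by case: b. Qed.

Lemma cancel_yY w : reduce ((oy, true) :: (oy, false) :: w) = reduce w.
Proof. exact: (reduce_cancel (oy, true)). Qed.
Lemma cancel_Yy w : reduce ((oy, false) :: (oy, true) :: w) = reduce w.
Proof. exact: (reduce_cancel' (oy, true)). Qed.

Lemma swap_y e b w : reduce ((oy, e) :: (oy, b) :: w) = reduce ((oy, b) :: (oy, e) :: w).
Proof.
case: e; case: b => //.
- by rewrite cancel_yY cancel_Yy.
- by rewrite cancel_yY cancel_Yy.
Qed.

Lemma subst1 img a : subst img [:: a] = limg img a.
Proof. by rewrite /subst /= cats0. Qed.

Ltac rcong := apply: reduce_conscong.

Section ShearL.
Variables p q : nat.
Hypothesis cop : coprime p q.
Hypothesis p0 : 0 < p.
Hypothesis q0 : 0 < q.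

Lemma shearL_claim n i j m : i + j + n = p + q - 2 -> m + i + 2 * j = 2 * p + q - 2 ->
  onpath p q i j ->
  reduce (lw p (p + q) m (i + j) j) =
  reduce ((oy, p * (2 * i) <= q * (2 * j + 1)) :: (oy, false) :: subst imgL (lw p q n i j)).
Proof.
elim: n i j m => [|n IH] i j m Hn Hm Hop.
  move: (Hop) => /and4P[Hi Hj H1 H2].
  have Ei : i = q - 1 by lia.
  have Ej : j = p - 1 by lia.
  have -> : m = 1 by lia.
  rewrite lw0 lwS ifT; last by nia.
  rewrite lw0 subst1 limgL_y.
  have E1 : (p * (2 * (i + j) + 1) <= (p + q) * (2 * j + 1)) = (p * (2 * i) <= q * (2 * j + 1)).
    by apply/idP/idP; lia.
  have E2 : (p * (2 * (i + j + 1)) <= (p + q) * (2 * j + 1)) = (p * (2 * i + 1) <= q * (2 * j + 1)).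
    by apply/idP/idP; lia.
  have E3 : (p * (2 * (i + j + 1) + 1) <= (p + q) * (2 * j + 1)) = false.
    by apply/negbTE; rewrite -ltnNge; subst i j; nia.
  by rewrite E1 E2 E3; rcong; rewrite cancel_Yy.
move: (Hop) => /and4P[Hi Hj H1 H2].
have Hnx := onpath_next cop p0 q0 Hn Hop.
case: m Hm => [|m] Hm; first by lia.
rewrite lwS ifT; last by nia.
have E1 : (p * (2 * (i + j) + 1) <= (p + q) * (2 * j + 1)) = (p * (2 * i) <= q * (2 * j + 1)).
  by apply/idP/idP; lia.
have E2 : (p * (2 * (i + j + 1)) <= (p + q) * (2 * j + 1)) = (p * (2 * i + 1) <= q * (2 * j + 1)).
  by apply/idP/idP; lia.
rewrite E1 E2 lwS; move: Hnx; case: ifP => C Hnx.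
  rewrite subst_cons limgL_y subst_cons limgL_z !cat_cons !cat0s.
  have IH' := IH (i + 1) j m ltac:(lia) ltac:(lia) Hnx.
  rewrite (addnAC i 1 j) in IH'.
  rcong; rewrite cancel_Yy; rcong; rewrite IH'; exact: swap_y.
move: (Hnx) => /and4P[_ _ H3 H4].
case: m Hm => [|m] Hm; first by lia.
rewrite lwS ifF; last by apply/negbTE; rewrite -leqNgt; nia.
have E3 : (p * (2 * (i + j + 1) + 1) <= (p + q) * (2 * j + 1)) = false.
  by apply/negbTE; rewrite -ltnNge; nia.
have E4 : (p * (2 * (i + j + 1) + 1) <= (p + q) * (2 * (j + 1))) = (p * (2 * i + 1) <= q * (2 * (j + 1))).
  by apply/idP/idP; lia.
rewrite E3 E4 subst_cons limgL_y subst_cons limgL_x !cat_cons !cat0s.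
have Hop' := Hnx.
have IH' := IH i (j + 1) m ltac:(lia) ltac:(lia) Hop'.
rewrite addnA in IH'.
have E5 : (p * (2 * i) <= q * (2 * (j + 1) + 1)) = true by apply/idP; nia.
rewrite E5 in IH'.
rcong; rewrite cancel_Yy; rcong; rcong; rcong; rewrite IH'; exact: cancel_yY.
Qed.


End ShearL.

Section ShearR.
Variables p q : nat.
Hypothesis cop : coprime p q.
Hypothesis p0 : 0 < p.
Hypothesis q0 : 0 < q.

Lemma shearR_claim n i j m : i + j + n = p + q - 2 -> m + 2 * i + j = p + 2 * q - 2 ->
  onpath p q i j ->
  reduce (lw (p + q) q m i (i + j)) =
  reduce ((oy, p * (2 * i + 1) <= q * (2 * j)) :: (oy, true) :: subst imgR (lw p q n i j)).
Proof.
elim: n i j m => [|n IH] i j m Hn Hm Hop.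
  move: (Hop) => /and4P[Hi Hj H1 H2].
  have Ei : i = q - 1 by lia.
  have Ej : j = p - 1 by lia.
  have -> : m = 1 by lia.
  rewrite lw0 lwS ifF; last by apply/negbTE; rewrite -leqNgt; nia.
  rewrite lw0 subst1 limgR_y.
  have E1 : ((p + q) * (2 * i + 1) <= q * (2 * (i + j) + 1)) = (p * (2 * i + 1) <= q * (2 * j)).
    by apply/idP/idP; lia.
  have E2 : ((p + q) * (2 * i + 1) <= q * (2 * (i + j + 1))) = (p * (2 * i + 1) <= q * (2 * j + 1)).
    by apply/idP/idP; lia.
  have E3 : ((p + q) * (2 * i + 1) <= q * (2 * (i + j + 1) + 1)) = true.
    by apply/idP; subst i j; nia.
  by rewrite E1 E2 E3; rcong; rewrite cancel_yY.
move: (Hop) => /and4P[Hi Hj H1 H2].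
have Hnx := onpath_next cop p0 q0 Hn Hop.
case: m Hm => [|m] Hm; first by lia.
rewrite lwS ifF; last by apply/negbTE; rewrite -leqNgt; nia.
have E1 : ((p + q) * (2 * i + 1) <= q * (2 * (i + j) + 1)) = (p * (2 * i + 1) <= q * (2 * j)).
  by apply/idP/idP; lia.
have E2 : ((p + q) * (2 * i + 1) <= q * (2 * (i + j + 1))) = (p * (2 * i + 1) <= q * (2 * j + 1)).
  by apply/idP/idP; lia.
rewrite E1 E2 lwS; move: Hnx; case: ifP => C Hnx; last first.
  rewrite subst_cons limgR_y subst_cons limgR_x !cat_cons !cat0s.
  have IH' := IH i (j + 1) m ltac:(lia) ltac:(lia) Hnx.
  rewrite addnA in IH'.
  rcong; rewrite cancel_yY; rcong; rewrite IH'; exact: swap_y.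
move: (Hnx) => /and4P[_ _ H3 H4].
case: m Hm => [|m] Hm; first by lia.
rewrite lwS ifT; last by nia.
have E3 : ((p + q) * (2 * i + 1) <= q * (2 * (i + j + 1) + 1)) = true.
  by apply/idP; nia.
have E4 : ((p + q) * (2 * (i + 1)) <= q * (2 * (i + j + 1) + 1)) = (p * (2 * (i + 1)) <= q * (2 * j + 1)).
  by apply/idP/idP; lia.
rewrite E3 E4 subst_cons limgR_y subst_cons limgR_z !cat_cons !cat0s.
have IH' := IH (i + 1) j m ltac:(lia) ltac:(lia) Hnx.
rewrite (addnAC i 1 j) in IH'.
have E5 : (p * (2 * (i + 1) + 1) <= q * (2 * j)) = false.
  by apply/negbTE; rewrite -ltnNge; nia.
rewrite E5 in IH'.
rcong; rewrite cancel_yY; rcong; rcong; rcong; rewrite IH'; exact: cancel_Yy.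
Qed.

End ShearR.


Definition om' (p q : nat) : F3 :=
  if q == 0 then gz else if p == 0 then gx else F3_of (omega_word p q).

Lemma omegaE (t : frac) : omega t = om' (t.1 %/ gcdn t.1 t.2) (t.2 %/ gcdn t.1 t.2).
Proof. by []. Qed.

Lemma om11 : om' 1 1 = gy.
Proof. by apply: val_inj; vm_compute. Qed.

Lemma om_shearL p q : coprime p q -> 0 < p + q -> om' p (p + q) = Fsub imgL (om' p q).
Proof.
move=> cop Hpq.
case: (posnP q) => [Hq | q0].
  subst q; move: cop; rewrite /coprime gcdn0 => /eqP ->.
  rewrite om11 /om' /=; apply: val_inj; by vm_compute.
case: (posnP p) => [Hp | p0].
  subst p; move: cop; rewrite /coprime gcd0n => /eqP ->.
  rewrite /om' /=; apply: val_inj; by vm_compute.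
rewrite /om' !ifF; try (apply/negbTE; rewrite -lt0n; lia).
rewrite Fsub_of; apply: F3_of_eq.
have copL : coprime p (p + q) by rewrite /coprime gcdnDl.
rewrite (omega_word_walk copL p0 ltac:(lia)) (omega_word_walk cop p0 q0).
have H := @shearL_claim p q cop p0 q0 (p + q - 2) 0 0 (2 * p + q - 2) ltac:(lia) ltac:(lia) (onpath00 cop p0 q0).
rewrite /lw addn0 in H.
have -> : p + (p + q) - 2 = 2 * p + q - 2 by lia.
rewrite H.
by rewrite !muln0 leq0n cancel_yY.
Qed.


Lemma om_shearR p q : coprime p q -> 0 < p + q -> om' (p + q) q = Fsub imgR (om' p q).
Proof.
move=> cop Hpq.
case: (posnP q) => [Hq | q0].
  subst q; move: cop; rewrite /coprime gcdn0 => /eqP ->.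
  rewrite /om' /=; apply: val_inj; by vm_compute.
case: (posnP p) => [Hp | p0].
  subst p; move: cop; rewrite /coprime gcd0n => /eqP ->.
  rewrite om11 /om' /=; apply: val_inj; by vm_compute.
rewrite /om' !ifF; try (apply/negbTE; rewrite -lt0n; lia).
rewrite Fsub_of; apply: F3_of_eq.
have copR : coprime (p + q) q by rewrite /coprime gcdnC addnC gcdnDl gcdnC.
rewrite (omega_word_walk copR ltac:(lia) q0) (omega_word_walk cop p0 q0).
have H := @shearR_claim p q cop p0 q0 (p + q - 2) 0 0 (p + 2 * q - 2) ltac:(lia) ltac:(lia) (onpath00 cop p0 q0).
rewrite /lw addn0 in H.
have -> : p + q + q - 2 = p + 2 * q - 2 by lia.
rewrite H.
have -> : (p * (2 * 0 + 1) <= q * (2 * 0)) = false by apply/negbTE; rewrite -ltnNge; lia.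
by rewrite cancel_Yy.
Qed.

Lemma coprime_divg a b : 0 < gcdn a b -> coprime (a %/ gcdn a b) (b %/ gcdn a b).
Proof.
move=> g0; rewrite /coprime.
have := muln_gcdl (a %/ gcdn a b) (b %/ gcdn a b) (gcdn a b).
rewrite !divnK ?dvdn_gcdl ?dvdn_gcdr // => E.
by rewrite -(eqn_pmul2r g0) mul1n E.
Qed.

Definition AL (t : frac) : frac := (t.1, t.1 + t.2).
Definition AR (t : frac) : frac := (t.1 + t.2, t.2).

Lemma omega_L t : 0 < t.1 + t.2 -> omega (AL t) = Fsub imgL (omega t).
Proof.
case: t => a b /= Hab; rewrite !omegaE /= gcdnDl.
have g0 : 0 < gcdn a b by rewrite gcdn_gt0; lia.
rewrite divnDl ?dvdn_gcdl //.
apply: om_shearL; first exact: coprime_divg.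
rewrite -divnDl ?dvdn_gcdl // divn_gt0 //.
apply: dvdn_leq; first lia.
by rewrite dvdn_addr ?dvdn_gcdl ?dvdn_gcdr.
Qed.

Lemma omega_R t : 0 < t.1 + t.2 -> omega (AR t) = Fsub imgR (omega t).
Proof.
case: t => a b /= Hab; rewrite !omegaE /=.
have -> : gcdn (a + b) b = gcdn a b by rewrite gcdnC addnC gcdnDl gcdnC.
have g0 : 0 < gcdn a b by rewrite gcdn_gt0; lia.
rewrite divnDl ?dvdn_gcdl //.
apply: om_shearR; first exact: coprime_divg.
rewrite -divnDl ?dvdn_gcdl // divn_gt0 //.
apply: dvdn_leq; first lia.
by rewrite dvdn_addr ?dvdn_gcdl ?dvdn_gcdr.
Qed.

Definition map3 (f : frac -> frac) (v : fvertex) : fvertex :=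
  let: (r, t, s) := v in (f r, f t, f s).
Definition map3F img (v : wvertex) : wvertex :=
  let: (a, b, c) := v in (Fsub img a, Fsub img b, Fsub img c).
Definition Am (m : bool) := if m then AR else AL.
Definition imgm (m : bool) := if m then imgR else imgL.

Lemma fchild_map3 m mm v : fchild (map3 (Am m) v) mm = map3 (Am m) (fchild v mm).
Proof.
case: v => [[[r1 r2] [t1 t2]] [s1 s2]].
case: m; case: mm; rewrite /= /fadd /AR /AL /=; congr (_, _, _); congr (_, _); lia.
Qed.

Lemma farey_at_cons m mv : farey_at (m :: mv) = map3 (Am m) (farey_at mv).
Proof.
rewrite /farey_at /=.
have -> : fchild farey_root m = map3 (Am m) farey_root by case: m.
elim: mv farey_root => [|b mv IH] v //=.
by rewrite fchild_map3 IH.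
Qed.

Lemma wchild_map3F m mm v : wchild (map3F (imgm m) v) mm = map3F (imgm m) (wchild v mm).
Proof.
case: v => [[a b] c].
by case: mm; rewrite /= ?Fsub_mul ?Fsub_inv.
Qed.

Lemma wroot_child m : wchild word_root m = map3F (imgm m) word_root.
Proof.
case: m; rewrite /= /word_root /=; congr (_, _, _); apply: val_inj; by vm_compute.
Qed.

Lemma word_at_cons m mv : word_at (m :: mv) = map3F (imgm m) (word_at mv).
Proof.
rewrite /word_at /= wroot_child.
elim: mv word_root => [|b mv IH] v //=.
by rewrite wchild_map3F IH.
Qed.

Definition ok3 (v : fvertex) : bool :=
  let: (r, t, s) := v in [&& 0 < r.1 + r.2, 0 < t.1 + t.2 & 0 < s.1 + s.2].

Lemma main_ind mv : ok3 (farey_at mv) /\ word_at mv = Phi (farey_at mv).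
Proof.
elim: mv => [|m mv [Hok IH]].
  split => //; rewrite /word_at /farey_at /=; congr (_, _, _); apply: val_inj; by vm_compute.
rewrite farey_at_cons word_at_cons IH.
case: (farey_at mv) Hok => [[r t] s] /= /and3P[Hr Ht Hs].
case: m => /=; split.
- rewrite /AR /=; apply/and3P; split; lia.
- by rewrite !omega_R.
- rewrite /AL /=; apply/and3P; split; lia.
- by rewrite !omega_L.
Qed.

Theorem theorem3p6 :
  (* Phi is a morphism of rooted planar binary trees FT -> WT ... *)
  Phi farey_root = word_root /\
  (forall mv : seq bool,
      Phi (fleft (farey_at mv)) = wleft (Phi (farey_at mv)) /\
      Phi (fright (farey_at mv)) = wright (Phi (farey_at mv))) /\
  (* ... equivalently, vertices at the same position correspond *)
  (forall mv : seq bool, word_at mv = Phi (farey_at mv)).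
Proof.
have Hr : forall mv m, farey_at (rcons mv m) = fchild (farey_at mv) m.
  by move=> mv m; rewrite /farey_at foldl_rcons.
have Hw : forall mv m, word_at (rcons mv m) = wchild (word_at mv) m.
  by move=> mv m; rewrite /word_at foldl_rcons.
split; first by have [_ <-] := main_ind [::].
split; last by move=> mv; have [_ ->] := main_ind mv.
move=> mv; split.
- have := Hr mv false; rewrite /= => <-.
  have [_ <-] := main_ind (rcons mv false).
  by have [_ <-] := main_ind mv; rewrite Hw.
- have := Hr mv true; rewrite /= => <-.
  have [_ <-] := main_ind (rcons mv true).
  by have [_ <-] := main_ind mv; rewrite Hw.
Qed.
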